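(* Let $G=(V,E)$ be a finite simple undirected graph, let $0<p\le 1$, let $T\subseteq V$ be a nonempty set maximizing $f_p(S)$ over all $S\subseteq V$, and let $v\in T$ be a vertex with $d_v(T)=\min_{u\in T}d_u(T)$. Then $\Delta_v(T)\le 2\,d_v(T)^p$.
   Context: For $v\in V$, $N(v)=\{u\in V:(u,v)\in E\}$ (so $v\notin N(v)$). For $S\subseteq V$ and $v\in V$, $d_v(S)=|N(v)\cap S|$. For $p>0$ and nonempty $S\subseteq V$, $f_p(S)=\frac{1}{|S|}\sum_{v\in S}d_v(S)^p$ (with the convention $0^p=0$), and $f_p(\emptyset)=0$. For $S\subseteq V$ and $v\in S$, $\Delta_v(S)=d_v(S)^p+\sum_{u\in N(v)\cap S}\big(d_u(S)^p-(d_u(S)-1)^p\big)$. *)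

(* Defs.v *)
From HB Require Import structures.
From mathcomp Require Import all_boot all_order all_algebra.
From mathcomp Require Import all_classical all_reals all_analysis.
Set Implicit Arguments. Unset Strict Implicit. Unset Printing Implicit Defensive.
Import Order.TTheory GRing.Theory Num.Theory.
Local Open Scope ring_scope.

Definition simple_graph (V : finType) (e : rel V) : Prop :=
  symmetric e /\ irreflexive e.

Definition nbhd (V : finType) (e : rel V) (v : V) : {set V} := [set u | e u v].

Definition deg_in (V : finType) (e : rel V) (S : {set V}) (v : V) : nat :=
  #|nbhd e v :&: S|.

(* f_p(S) = (1/|S|) sum_{v in S} d_v(S)^p, f_p(empty) = 0.
   powR satisfies 0 `^ p = 0 for p <> 0, matching the convention 0^p = 0. *)
Definition fp (R : realType) (V : finType) (e : rel V) (p : R) (S : {set V}) : R :=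
  if S == finset.set0 then 0
  else (\sum_(v in S) ((deg_in e S v)%:R `^ p)) / (#|S|%:R).

Definition Delta (R : realType) (V : finType) (e : rel V) (p : R) (S : {set V}) (v : V) : R :=
  (deg_in e S v)%:R `^ p +
  \sum_(u in nbhd e v :&: S)
     ((deg_in e S u)%:R `^ p - ((deg_in e S u)%:R - 1) `^ p).

(* Main.v *)
Require Import Defs.
From HB Require Import structures.
From mathcomp Require Import all_boot all_order all_algebra.
From mathcomp Require Import all_classical all_reals all_analysis.
From mathcomp Require Import ring lra.
Import Order.TTheory GRing.Theory Num.Theory.
Local Open Scope ring_scope.
Set Implicit Arguments. Unset Strict Implicit.

Lemma le_powR_self (R : realType) (r p : R) : 0 <= r <= 1 -> 0 < p -> p <= 1 -> r <= r `^ p.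
Proof.
move=> /andP[r0 r1] p0 p1.
have [->|rn0] := eqVneq r 0; first exact: powR_ge0.
apply: ger1_powR => //; rewrite r1 andbT lt_neqAle eq_sym rn0 r0 //.
Qed.

Lemma key (R : realType) (p d x : R) : 0 < p -> p <= 1 -> 1 <= d -> d <= x ->
  x `^ p - (x - 1) `^ p <= d `^ p / d.
Proof.
move=> p0 p1 d1 dx.
have d0 : 0 < d by apply: lt_le_trans d1; exact: ltr01.
have x0 : 0 < x by apply: lt_le_trans dx.
have step1 : x `^ p - (x - 1) `^ p <= x `^ p / x.
  have -> : x - 1 = x * ((x - 1) / x) by rewrite mulrC divfK // gt_eqF.
  have r01 : 0 <= (x - 1) / x <= 1.
    apply/andP; split.
      by apply: divr_ge0; [rewrite subr_ge0; apply: le_trans dx|apply: ltW].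
    by rewrite ler_pdivrMr // mul1r lerBlDr lerDl.
  rewrite powRM; [|exact: ltW|by case/andP: r01].
  have := le_powR_self r01 p0 p1 => h.
  have hx := powR_ge0 x p.
  have : x `^ p * ((x - 1) / x) <= x `^ p * ((x - 1) / x) `^ p by apply: ler_wpM2l.
  suff -> : x `^ p * ((x - 1) / x) = x `^ p - x `^ p / x by lra.
  by field; rewrite gt_eqF.
apply: le_trans step1 _.
have -> : x = d * (x / d) by rewrite mulrC divfK // gt_eqF.
have s1 : 1 <= x / d by rewrite ler_pdivlMr // mul1r.
have s0 : 0 < x / d by apply: lt_le_trans s1; exact: ltr01.
rewrite powRM; [|exact: ltW|exact: ltW].
rewrite invfM mulrACA -[X in _ <= X]mulr1.
apply: ler_wpM2l; first by apply: divr_ge0; [exact: powR_ge0|exact: ltW].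
rewrite ler_pdivrMr // mul1r; exact: ler1_powR.
Qed.

Theorem lemma3 (R : realType) (V : finType) (e : rel V) (p : R) (T : {set V}) (v : V) :
  simple_graph e ->
  0 < p -> p <= 1 ->
  T != finset.set0 ->
  (forall S : {set V}, fp e p S <= fp e p T) ->
  v \in T ->
  (forall u, u \in T -> (deg_in e T v <= deg_in e T u)%N) ->
  Delta e p T v <= 2 * (deg_in e T v)%:R `^ p.
Proof.
move=> _ p0 p1 _ _ vT hmin.
rewrite /Delta.
set d := deg_in e T v.
set A := nbhd e v :&: T.
have cA : #|A| = d by [].
set c := (d%:R : R) `^ p / d%:R.
have hs : \sum_(u in A) ((deg_in e T u)%:R `^ p - ((deg_in e T u)%:R - 1) `^ p) <= \sum_(u in A) c.
  apply: ler_sum => u uA.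
  have uT : u \in T by move: uA; rewrite inE => /andP[].
  have d1 : (1 <= d)%N by rewrite -cA; apply/card_gt0P; exists u.
  apply: key => //; first by rewrite ler1n.
  by rewrite ler_nat; apply: hmin.
apply: le_trans (lerD (lexx _) hs) _.
rewrite sumr_const cA /c.
have [->|dn0] := eqVneq d 0%N.
  by have h := powR_ge0 (0%:R : R) p; rewrite mulr0n addr0; lra.
have h := powR_ge0 (d%:R : R) p.
have -> : (d%:R : R) `^ p / d%:R *+ d = (d%:R : R) `^ p.
  by rewrite -mulr_natr divfK // pnatr_eq0.
lra.
Qed.
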